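(* Let $\lambda=\langle1^{m_1},2^{m_2},\dots,k^{m_k}\rangle$ with all $m_i>0$, $n\ge1$, $x_1,\dots,x_n>0$, $t>0$, and put $M_j=m_j+\dots+m_k$, $M_{k+1}=0$. For $1\le j\le k$, the stationary current of species $j$ in the mTAZRP of type $\lambda$ on $n$ sites, i.e. $\sum_w\pi(w)\,x_1^{-1}t^{d_j(w)}[c_j(w)]_t$ where $\pi$ is the stationary distribution and $c_j(w)$, $d_j(w)$ are the numbers of particles at site $1$ of species $j$ and of species $>j$ respectively, equals $$[M_j]_t\frac{\widetilde H_{\langle1^{M_j-1}\rangle}(x;1,t)}{\widetilde H_{\langle1^{M_j}\rangle}(x;1,t)}-[M_{j+1}]_t\frac{\widetilde H_{\langle1^{M_{j+1}-1}\rangle}(x;1,t)}{\widetilde H_{\langle1^{M_{j+1}}\rangle}(x;1,t)},$$ where the second term is $0$ when $j=k$ and $x=(x_1,\dots,x_n)$.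
   Context: mTAZRP: for a partition $\lambda$ and $n\ge1$, sites $1,\dots,n$ on a ring (site $n+1$ is site $1$); a configuration assigns to each site a multiset of species with union the multiset of parts of $\lambda$; if site $j$ has $c$ particles of species $r$ and $d$ of species larger than $r$, a particle of species $r$ jumps from $j$ to $j+1$ at rate $x_j^{-1}t^d[c]_t$. $\langle1^{m_1},\dots,k^{m_k}\rangle$ is the partition with part $i$ occurring $m_i$ times. Notation: $[a]_t=1+t+\dots+t^{a-1}$ ($[0]_t=0$), $[a]_t!=\prod_{b\le a}[b]_t$, $\begin{bmatrix}m\\ \eta_1,\dots,\eta_n\end{bmatrix}_t=[m]_t!/\prod_i[\eta_i]_t!$, $\widetilde H_{\langle1^m\rangle}(x_1,\dots,x_n;1,t)=\sum_{\eta_1+\dots+\eta_n=m,\ \eta_i\ge0}\begin{bmatrix}m\\ \eta_1,\dots,\eta_n\end{bmatrix}_t\prod_i x_i^{\eta_i}$, with $\widetilde H_{\langle1^0\rangle}=1$. *)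

(* Defs.v *)
From mathcomp Require Import all_boot all_order all_algebra.
Set Implicit Arguments. Unset Strict Implicit. Unset Printing Implicit Defensive.
Import GRing.Theory Num.Theory.
Local Open Scope ring_scope.

Definition qint (R : fieldType) (t : R) (a : nat) : R := \sum_(i < a) t ^+ i.
Definition qfact (R : fieldType) (t : R) (a : nat) : R :=
  \prod_(1 <= b < a.+1) qint t b.

(* Htilde_{<1^m>}(x_1..x_n; 1, t) = sum over weak compositions eta of m into
   n parts of the t-multinomial coefficient times prod x_i^eta_i *)
Definition Htilde (R : fieldType) (n : nat) (x : 'I_n -> R) (t : R) (m : nat) : R :=
  \sum_(eta : {ffun 'I_n -> 'I_m.+1} | \sum_(i < n) (eta i : nat) == m)
     (qfact t m / \prod_(i < n) qfact t (eta i)) * \prod_(i < n) x i ^+ eta i.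

(* mTAZRP configurations: sites 'I_n (site 1 = index 0, site i+1 = ordS i,
   cyclically), species 'I_k (index s stands for species s+1);
   w i s = number of particles of species s+1 at site i.  Counts are bounded
   by N (the total number of particles). *)
Definition config (n k N : nat) := {ffun 'I_n -> {ffun 'I_k -> 'I_N.+1}}.

Definition valid n k N (m : 'I_k -> nat) (w : config n k N) : bool :=
  [forall s : 'I_k, \sum_(i < n) (w i s : nat) == m s].

Definition move n k N (w : config n k N) (i : 'I_n) (r : 'I_k) : config n k N :=
  [ffun a => [ffun s => inord ((w a s : nat) - ((a == i) && (s == r))
                                + ((a == ordS i) && (s == r)))]].

Definition jump_rate (R : fieldType) n k N (x : 'I_n -> R) (t : R)
    (w : config n k N) (i : 'I_n) (r : 'I_k) : R :=
  (x i)^-1 * t ^+ (\sum_(s < k | (r < s)%N) (w i s : nat)) * qint t (w i r).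

Definition trans_rate (R : fieldType) n k N (x : 'I_n -> R) (t : R)
    (w w' : config n k N) : R :=
  \sum_(i < n) \sum_(r < k) (if w' == move w i r then jump_rate x t w i r else 0).

Definition stationary (R : realFieldType) n k N (m : 'I_k -> nat)
    (x : 'I_n -> R) (t : R) (pi : config n k N -> R) : Prop :=
  [/\ forall w, valid m w -> 0 <= pi w,
      \sum_(w | valid m w) pi w = 1 &
      forall w', valid m w' ->
        \sum_(w | valid m w) pi w * trans_rate x t w w'
        = pi w' * \sum_(w | valid m w) trans_rate x t w' w].

(* Main.v *)
Require Import Defs.
From mathcomp Require Import all_boot all_order all_algebra zify ring lra.
Import GRing.Theory Num.Theory.
Local Open Scope ring_scope.

Module Aux.
Import Order.TTheory.
Set Implicit Arguments. Unset Strict Implicit. Unset Printing Implicit Defensive.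

Section Q.
Variables (R : realFieldType) (t : R).
Hypothesis ht : 0 < t.

Lemma qint0 : qint t 0 = 0.
Proof. by rewrite /qint big_ord0. Qed.

Lemma qintS b : qint t b.+1 = qint t b + t ^+ b.
Proof. by rewrite /qint big_ord_recr. Qed.

Lemma qintD a b : qint t (a + b) = qint t b + t ^+ b * qint t a.
Proof.
elim: a => [|a IH]; first by rewrite add0n qint0 mulr0 addr0.
by rewrite addSn qintS IH qintS mulrDr -exprD addrA addnC.
Qed.

Lemma qint_gt0 b : (0 < b)%N -> 0 < qint t b.
Proof.
case: b => // b _; rewrite qintS.
have: 0 <= qint t b by rewrite /qint sumr_ge0 // => i _; rewrite exprn_ge0 // ltW.
by move=> h; apply: ltr_wpDl h _; rewrite exprn_gt0.
Qed.

Lemma qint_ge0 b : 0 <= qint t b.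
Proof. by rewrite /qint sumr_ge0 // => i _; rewrite exprn_ge0 // ltW. Qed.

Lemma qfactS b : qfact t b.+1 = qfact t b * qint t b.+1.
Proof. by rewrite /qfact big_nat_recr. Qed.

Lemma qfact_gt0 b : 0 < qfact t b.
Proof.
elim: b => [|b IH]; first by rewrite /qfact big_nil ltr01.
by rewrite qfactS mulr_gt0 // qint_gt0.
Qed.
End Q.

Lemma big_geS (T : Type) (idx : T) (op : Monoid.com_law idx) k a (ha : (a < k)%N)
   (G : 'I_k -> T) :
  \big[op/idx]_(s < k | (a <= s)%N) G s
  = op (G (Ordinal ha)) (\big[op/idx]_(s < k | (a < s)%N) G s).
Proof.
rewrite (bigD1 (Ordinal ha)) //=; apply: f_equal; apply: eq_bigl => s.
by rewrite -val_eqE /= ltn_neqAle andbC eq_sym.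
Qed.

Lemma big_geN (T : Type) (idx : T) (op : Monoid.com_law idx) k a (ha : (k <= a)%N)
   (G : 'I_k -> T) :
  \big[op/idx]_(s < k | (a <= s)%N) G s = idx.
Proof.
rewrite big_pred0 // => s; apply/negbTE; rewrite -ltnNge.
exact: leq_trans (ltn_ord s) ha.
Qed.

Lemma tele (R : realFieldType) (t : R) k (c : 'I_k -> nat) a :
  \sum_(r < k | (a <= r)%N) t ^+ (\sum_(s < k | (r < s)%N) c s) * qint t (c r)
  = qint t (\sum_(s < k | (a <= s)%N) c s).
Proof.
suff H : forall d a, (k - a <= d)%N ->
  \sum_(r < k | (a <= r)%N) t ^+ (\sum_(s < k | (r < s)%N) c s) * qint t (c r)
  = qint t (\sum_(s < k | (a <= s)%N) c s) by exact: H.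
elim=> [|d IH] {}a hd.
  have ha : (k <= a)%N by rewrite -subn_eq0 -leqn0.
  by rewrite !big_geN // qint0.
case: (leqP k a) => ha; first by rewrite !big_geN // qint0.
rewrite (big_geS _ ha) (big_geS _ ha) /= qintD.
rewrite (IH a.+1); last by lia.
by rewrite addrC.
Qed.

Lemma two_le_sum (I : finType) (f : I -> nat) i j : i != j ->
  (f i + f j <= \sum_b f b)%N.
Proof.
move=> hij; rewrite (bigD1 i) //= (bigD1 j) /=; last by rewrite eq_sym.
by rewrite addnA leq_addr.
Qed.

Lemma one_le_sum (I : finType) (P : pred I) (f : I -> nat) i : P i ->
  (f i <= \sum_(b | P b) f b)%N.
Proof. by move=> hi; rewrite (bigD1 i) //= leq_addr. Qed.

Lemma natlem (c S : nat) (bi bo : bool) : (bi -> 0 < c)%N ->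
  (c - bi + bo + S = c + S - bi + bo)%N.
Proof. case: bi; case: bo => /= h; rewrite ?subn0 ?addn0 //; try (have := h isT); lia. Qed.

Section Cfg.
Variables (k : nat) (m : 'I_k -> nat) (n : nat).
Local Notation N := (\sum_(s < k) m s)%N.
Local Notation cfg := (config n k N).

Definition C (a : nat) (w : cfg) : {ffun 'I_n -> nat} :=
  [ffun i => \sum_(s < k | (a <= s)%N) (w i s : nat)].

Definition sh (i : 'I_n) (phi : {ffun 'I_n -> nat}) : {ffun 'I_n -> nat} :=
  [ffun b => (phi b - (b == i) + (b == ordS i))%N].

Lemma CE a (w : cfg) b : C a w b = (\sum_(s < k | (a <= s)%N) (w b s : nat))%N.
Proof. by rewrite ffunE. Qed.

Lemma validP (w : cfg) : valid m w -> forall s, (\sum_(b < n) (w b s : nat))%N = m s.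
Proof. by move=> /forallP h s; apply/eqP/h. Qed.

Lemma m_le_N s : (m s <= N)%N.
Proof. exact: (one_le_sum (P := predT)). Qed.

Lemma sum_move_r (w : cfg) i r : (0 < w i r)%N ->
  (\sum_(b < n) (w b r - (b == i) + (b == ordS i)))%N = (\sum_(b < n) (w b r : nat))%N.
Proof.
move=> hr; rewrite big_split /=.
have -> : (\sum_(b < n) ((b == ordS i) : nat))%N = 1%N.
  rewrite (bigD1 (ordS i)) //= eqxx big1 // => b /negbTE ->; done.
rewrite (bigD1 i) //= eqxx [in RHS](bigD1 i) //=.
rewrite (eq_bigr (fun b => (w b r : nat))); last by move=> b /negbTE ->; rewrite subn0.
by rewrite addnAC subnK.
Qed.

Lemma move_val (w : cfg) i r b s : valid m w -> (0 < w i r)%N ->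
  ((move w i r) b s : nat) = if s == r then (w b r - (b == i) + (b == ordS i))%N
                             else (w b s : nat).
Proof.
move=> hv hr; rewrite /move !ffunE.
case: (s =P r) => [->|/eqP hs]; last first.
  by rewrite !andbF subn0 addn0 inordK.
rewrite !andbT inordK // ltnS.
apply: leq_trans (m_le_N r).
rewrite -(validP hv r) -(sum_move_r hr).
exact: (one_le_sum (P := predT) (fun b => (w b r - (b == i) + (b == ordS i))%N)).
Qed.

Lemma move_valid (w : cfg) i r : valid m w -> (0 < w i r)%N -> valid m (move w i r).
Proof.
move=> hv hr; apply/forallP => s; apply/eqP.
rewrite (eq_bigr (fun b => if s == r then (w b r - (b == i) + (b == ordS i))%N
                             else (w b s : nat))); last by move=> b _; rewrite move_val.
case: eqP => [->|_]; last exact: validP.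
by rewrite sum_move_r // validP.
Qed.

Lemma C_move_lt (w : cfg) i r a : valid m w -> (0 < w i r)%N -> (r < a)%N ->
  C a (move w i r) = C a w.
Proof.
move=> hv hr ha; apply/ffunP => b; rewrite !CE; apply: eq_bigr => s hs.
rewrite move_val //; case: (s =P r) => // hsr; exfalso; move: hs; rewrite hsr; lia.
Qed.

Lemma C_move_ge (w : cfg) i r a : valid m w -> (0 < w i r)%N -> (a <= r)%N ->
  C a (move w i r) = sh i (C a w).
Proof.
move=> hv hr ha; apply/ffunP => b; rewrite CE /sh [in RHS]ffunE CE.
rewrite (bigD1 r) //= [X in (_ = X - _ + _)%N](bigD1 r) //=.
have -> : (\sum_(s < k | (a <= s) && (s != r)) ((move w i r) b s : nat))%N
   = (\sum_(s < k | (a <= s) && (s != r)) (w b s : nat))%N.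
  by apply: eq_bigr => s /andP[_ /negbTE hs]; rewrite move_val // hs.
rewrite move_val // eqxx.
apply: natlem => hbi; move/eqP: hbi => ->; exact: hr.
Qed.

Lemma C_le_N (w : cfg) a i : valid m w -> (C a w i <= N)%N.
Proof.
move=> hv; rewrite ffunE.
apply: (@leq_trans (\sum_(s < k) (w i s : nat))).
  rewrite [X in (_ <= X)%N](bigID (fun s : 'I_k => (a <= s)%N)) /=; exact: leq_addr.
by apply: leq_sum => s _; rewrite -(validP hv s); exact: (one_le_sum (P := predT) (fun b => (w b s : nat))).
Qed.

Lemma sum_C (w : cfg) a : valid m w ->
  (\sum_(i < n) C a w i)%N = (\sum_(s < k | (a <= s)%N) m s)%N.
Proof.
move=> hv; rewrite (eq_bigr (fun i => \sum_(s < k | (a <= s)%N) (w i s : nat))%N);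
  last by move=> i _; rewrite ffunE.
by rewrite exchange_big /=; apply: eq_bigr => s _; rewrite validP.
Qed.

End Cfg.

Section Gen.
Variables (R : realFieldType) (k : nat) (m : 'I_k -> nat) (n : nat)
  (x : 'I_n -> R) (t : R).
Local Notation N := (\sum_(s < k) m s)%N.
Local Notation cfg := (config n k N).
Variable pi : cfg -> R.
Hypothesis hpi : stationary m x t pi.

Lemma gen (g : cfg -> R) :
  \sum_(w | valid m w) pi w * \sum_(w' | valid m w') trans_rate x t w w' * (g w' - g w) = 0.
Proof.
case: hpi => _ _ bal.
have E1 : \sum_(w | valid m w) pi w * \sum_(w' | valid m w') trans_rate x t w w' * g w'
   = \sum_(w | valid m w) pi w * g w * \sum_(w' | valid m w') trans_rate x t w w'.
  under eq_bigr do rewrite big_distrr /=.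
  rewrite exchange_big /=; apply: eq_bigr => w' hw'.
  rewrite (eq_bigr (fun w => pi w * trans_rate x t w w' * g w')); last by move=> *; rewrite mulrA.
  by rewrite -mulr_suml bal //; ring.
transitivity (\sum_(w | valid m w) pi w * \sum_(w' | valid m w') trans_rate x t w w' * g w'
  - \sum_(w | valid m w) pi w * g w * \sum_(w' | valid m w') trans_rate x t w w'); last first.
  by rewrite E1 subrr.
rewrite -sumrB; apply: eq_bigr => w _; rewrite -mulrA -mulrBr; congr (_ * _).
by rewrite mulr_sumr -sumrB; apply: eq_bigr => w' _; ring.
Qed.

Lemma jump_rate0 (w : cfg) i r : (w i r : nat) = 0%N -> jump_rate x t w i r = 0.
Proof. by rewrite /jump_rate => ->; rewrite qint0 mulr0. Qed.

Lemma trans_sum (w : cfg) (g : cfg -> R) : valid m w ->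
  \sum_(w' | valid m w') trans_rate x t w w' * g w'
  = \sum_(i < n) \sum_(r < k) jump_rate x t w i r * g (move w i r).
Proof.
move=> hv; rewrite /trans_rate.
under eq_bigr do rewrite mulr_suml; rewrite exchange_big /=.
apply: eq_bigr => i _; under eq_bigr do rewrite mulr_suml; rewrite exchange_big /=.
apply: eq_bigr => r _.
case: (posnP (w i r)) => hr.
  rewrite jump_rate0 // mul0r; apply: big1 => w' _.
  by case: eqP => _; rewrite ?mul0r // jump_rate0 // mul0r.
rewrite (bigD1 (move w i r)) /=; last exact: move_valid.
rewrite eqxx [X in _ + X]big1 ?addr0 // => w' /andP[_ /negbTE ->]; by rewrite mul0r.
Qed.

Lemma rate_sum (w : cfg) i a :
  \sum_(r < k | (a <= r)%N) jump_rate x t w i r = (x i)^-1 * qint t (C a w i).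
Proof.
rewrite /jump_rate CE -(tele t (fun s => (w i s : nat))) big_distrr /=.
by apply: eq_bigr => r _; rewrite mulrA.
Qed.

Lemma lumped_gen a (G : {ffun 'I_n -> nat} -> R) :
  \sum_(w | valid m w) pi w *
    \sum_(i < n) ((x i)^-1 * qint t (C a w i)) * (G (sh i (C a w)) - G (C a w)) = 0.
Proof.
rewrite -[RHS](gen (fun w => G (C a w))); apply: eq_bigr => w hv; congr (_ * _).
rewrite (trans_sum _ hv); apply: eq_bigr => i _.
rewrite -rate_sum mulr_suml [in RHS](bigID (fun r : 'I_k => (a <= r)%N)) /=.
rewrite [X in _ = _ + X]big1 ?addr0; last first.
  move=> r; rewrite -ltnNge => hra; case: (posnP (w i r)) => hr.
    by rewrite jump_rate0 // mul0r.
  by rewrite C_move_lt // subrr mulr0.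
apply: eq_bigr => r hra; case: (posnP (w i r)) => hr.
  by rewrite jump_rate0 // !mul0r.
by rewrite C_move_ge.
Qed.
End Gen.

Lemma natlem2 (e f : nat) (p q : bool) : (p -> 0 < e)%N -> f = (e - p + q)%N ->
  e = (f + p - q)%N.
Proof. by case: p; case: q => /= h ->; rewrite ?subn0 ?addn0 //; try (have := h isT); lia. Qed.

Lemma natlem3 (f : nat) (p q : bool) : (q -> 0 < f)%N ->
  (f + p - q - p + q = f)%N.
Proof. by case: p; case: q => /= h; rewrite ?subn0 ?addn0 //; try (have := h isT); lia. Qed.

Lemma prod2 (R : comRingType) (I : finType) (F : I -> R) i j : i != j ->
  \prod_b F b = F i * F j * \prod_(b | (b != i) && (b != j)) F b.
Proof.
move=> hij; rewrite (bigD1 i) //= (bigD1 j) /=; last by rewrite eq_sym.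
by rewrite mulrA; congr (_ * _); apply: eq_bigl => b; rewrite andbC.
Qed.

Section Lump.
Variables (R : realFieldType) (n : nat) (x : 'I_n -> R) (t : R) (B : nat).
Hypotheses (hx : forall i, 0 < x i) (ht : 0 < t).
Local Notation E := {ffun 'I_n -> 'I_B.+1}.

Definition ev (eta : E) : {ffun 'I_n -> nat} := [ffun i => (eta i : nat)].
Definition rt (phi : {ffun 'I_n -> nat}) i := (x i)^-1 * qint t (phi i).
Definition F1 i (e : nat) := x i ^+ e / qfact t e.
Definition mu (phi : {ffun 'I_n -> nat}) := \prod_i F1 i (phi i).

Lemma ev_inj : injective ev.
Proof.
move=> a b h; apply/ffunP => i; apply/val_inj.
by have := congr1 (fun f : {ffun 'I_n -> nat} => f i) h; rewrite !ffunE.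
Qed.

Lemma evE eta i : ev eta i = eta i. Proof. by rewrite ffunE. Qed.

Lemma F1_gt0 i e : 0 < F1 i e.
Proof. by rewrite /F1 divr_gt0 ?exprn_gt0 ?(qfact_gt0 ht). Qed.

Lemma mu_gt0 phi : 0 < mu phi.
Proof. by rewrite /mu prodr_gt0 // => i _; exact: F1_gt0. Qed.

Lemma rt_ge0 phi i : 0 <= rt phi i.
Proof. by rewrite /rt mulr_ge0 ?invr_ge0 ?(ltW (hx i)) ?(qint_ge0 ht). Qed.

Lemma rt_gt0 (phi : {ffun 'I_n -> nat}) i : (0 < phi i)%N -> 0 < rt phi i.
Proof. by move=> h; rewrite /rt mulr_gt0 ?invr_gt0 ?hx ?(qint_gt0 ht). Qed.

Lemma rt0 (phi : {ffun 'I_n -> nat}) i : phi i = 0%N -> rt phi i = 0.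
Proof. by move=> h; rewrite /rt h qint0 mulr0. Qed.


Lemma Fstep i e : F1 i e.+1 * ((x i)^-1 * qint t e.+1) = F1 i e.
Proof.
rewrite /F1 qfactS exprS.
have h1 : x i != 0 by rewrite gt_eqF.
have h2 : qint t e.+1 != 0 by rewrite gt_eqF // (qint_gt0 ht).
have h3 : qfact t e != 0 by rewrite gt_eqF // (qfact_gt0 ht).
by field; rewrite h1 h2 h3.
Qed.

Lemma mu_step (phi psi : {ffun 'I_n -> nat}) i j : i != j ->
  psi i = (phi i).+1 -> phi j = (psi j).+1 ->
  (forall b, b != i -> b != j -> psi b = phi b) ->
  mu psi * rt psi i = mu phi * rt phi j.
Proof.
move=> hij hi hj ho; rewrite /mu (prod2 _ hij) [in RHS](prod2 _ hij).
have -> : \prod_(b | (b != i) && (b != j)) F1 b (psi b)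
       = \prod_(b | (b != i) && (b != j)) F1 b (phi b).
  by apply: eq_bigr => b /andP[h1 h2]; rewrite ho.
rewrite /rt hi hj -(Fstep i (phi i)) -(Fstep j (psi j)); ring.
Qed.

Lemma per_i (phi : {ffun 'I_n -> nat}) i : (\sum_b phi b <= B)%N ->
  \sum_(eta : E) mu (ev eta) * rt (ev eta) i * (sh i (ev eta) == phi)%:R
  = mu phi * rt phi (ordS i).
Proof.
move=> hB; set i' := ordS i.
have key : forall eta : E, (0 < ev eta i)%N -> sh i (ev eta) = phi ->
    forall b, ev eta b = (phi b + (b == i) - (b == i'))%N.
  move=> eta hpos hsh b; apply: natlem2; first by move/eqP=> ->.
  by rewrite -hsh /sh ffunE.
case: (boolP (0 < phi i')%N) => P; last first.
  move: P; rewrite -leqNgt leqn0 => /eqP h0.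
  rewrite rt0 // mulr0; apply: big1 => eta _.
  case: (posnP (ev eta i)) => hpos; first by rewrite rt0 // mulr0 mul0r.
  case: eqP => hsh; last by rewrite mulr0.
  exfalso; have := congr1 (fun f : {ffun 'I_n -> nat} => f i') hsh.
  by rewrite /sh ffunE eqxx h0 addn1.
have hb b : (phi b + (b == i) - (b == i') <= B)%N.
  apply: leq_trans hB.
  case: (boolP ((b == i) && (b != i'))) => [/andP[/eqP -> hii]|hno].
    rewrite eqxx (negbTE hii) subn0 addn1.
    have := two_le_sum phi hii.
    move=> h; apply: leq_trans h; by rewrite -addn1 leq_add2l.
  rewrite (bigD1 b) //=.
  by move: hno; case: (b == i); case: (b == i') => //= _; lia.
set psi : {ffun 'I_n -> nat} := [ffun b => (phi b + (b == i) - (b == i'))%N].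
set pre : E := [ffun b => inord (psi b)].
have evpre : ev pre = psi.
  by apply/ffunP => b; rewrite !ffunE inordK // ltnS; exact: hb.
have shpsi : sh i psi = phi.
  apply/ffunP => b; rewrite !ffunE.
  by apply: natlem3 => /eqP ->.
rewrite (bigD1 pre) //= evpre shpsi eqxx mulr1 [X in _ + X]big1 ?addr0; last first.
  move=> eta hne; case: (posnP (ev eta i)) => hpos; first by rewrite rt0 // mulr0 mul0r.
  case: eqP => hsh; last by rewrite mulr0.
  exfalso; move/negP: hne; apply; apply/eqP/ev_inj; rewrite evpre.
  by apply/ffunP => b; rewrite (key _ hpos hsh b) ffunE.
case: (i =P i') => [hii|hii].
  have -> : psi = phi by apply/ffunP => b; rewrite ffunE hii addnK.
  by rewrite [in LHS]hii.
have hii' : i != i' by apply/eqP.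
apply: mu_step => //.
- by rewrite ffunE eqxx (negbTE hii') addn1 subn0.
- by rewrite ffunE eq_sym (negbTE hii') eqxx /=; lia.
- by move=> b h1 h2; rewrite ffunE (negbTE h1) (negbTE h2) addn0 subn0.
Qed.

Definition In (phi : {ffun 'I_n -> nat}) (eta : E) :=
  \sum_(i < n) rt (ev eta) i * (sh i (ev eta) == phi)%:R.
Definition Out (phi : {ffun 'I_n -> nat}) := \sum_(i < n) rt phi i.

Lemma MS (phi : {ffun 'I_n -> nat}) : (\sum_b phi b <= B)%N ->
  \sum_(eta : E) mu (ev eta) * In phi eta = mu phi * Out phi.
Proof.
move=> hB; rewrite /In /Out.
under eq_bigr do rewrite big_distrr /=.
rewrite exchange_big /=.
rewrite [in RHS](reindex_inj (@ordS_inj n)) big_distrr /=.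
apply: eq_bigr => i _; rewrite -per_i //; apply: eq_bigr => eta _; by rewrite mulrA.
Qed.

Lemma In_ge0 phi eta : 0 <= In phi eta.
Proof. by rewrite /In sumr_ge0 // => i _; rewrite mulr_ge0 ?rt_ge0 ?ler0n. Qed.

Lemma sum_sh (phi : {ffun 'I_n -> nat}) i : (0 < phi i)%N ->
  (\sum_b sh i phi b = \sum_b phi b)%N.
Proof.
move=> hp; rewrite /sh.
under eq_bigr do rewrite ffunE.
rewrite big_split /=.
have -> : (\sum_(b < n) ((b == ordS i) : nat))%N = 1%N.
  rewrite (bigD1 (ordS i)) //= eqxx big1 // => b /negbTE ->; done.
rewrite (bigD1 i) //= eqxx [in RHS](bigD1 i) //=.
rewrite (eq_bigr (fun b => phi b)); last by move=> b /negbTE ->; rewrite subn0.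
by rewrite addnAC subnK.
Qed.

End Lump.

Lemma sum_ind_nat n (p : 'I_n) : (\sum_(b < n) (b * (b == p)) = p)%N.
Proof.
rewrite (bigD1 p) //= eqxx muln1 big1 ?addn0 // => b /negbTE ->; by rewrite muln0.
Qed.

Section Max.
Variables (R : realFieldType) (n : nat) (x : 'I_n -> R) (t : R) (B M : nat).
Hypotheses (hx : forall i, 0 < x i) (ht : 0 < t) (hMB : (M <= B)%N) (hn : (0 < n)%N).
Local Notation E := {ffun 'I_n -> 'I_B.+1}.
Local Notation rt := (rt x t).
Local Notation mu := (mu x t).
Local Notation In := (In x t).
Local Notation Out := (Out x t).
Variable nu : E -> R.
Hypotheses (hnu0 : forall eta, 0 <= nu eta)
  (hnuS : forall eta : E, (\sum_i ev eta i != M)%N -> nu eta = 0)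
  (hLB : forall eta' : E, \sum_(eta : E) nu eta * \sum_(i < n) rt (ev eta) i *
          ((sh i (ev eta) == ev eta')%:R - (ev eta == ev eta')%:R) = 0).

Definition S (eta : E) := (\sum_i ev eta i == M)%N.

Lemma bal1 eta' : \sum_eta nu eta * In (ev eta') eta = nu eta' * Out (ev eta').
Proof.
have := hLB eta'.
rewrite (eq_bigr (fun eta => nu eta * In (ev eta') eta
          - (ev eta == ev eta')%:R * (nu eta * Out (ev eta)))); last first.
  move=> eta _; rewrite /In /Out.
  under eq_bigr do rewrite mulrBr.
  rewrite sumrB mulrBr -mulr_suml; congr (_ - _); ring.
rewrite sumrB [X in _ - X](bigD1 eta') //= eqxx mul1r [X in _ - (_ + X)]big1 ?addr0.
  by move/subr0_eq.
move=> eta hne; case: eqP => [/ev_inj e|_]; last by rewrite mul0r.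
by move: hne; rewrite e eqxx.
Qed.

Lemma In_S eta' eta : S eta' -> ~~ S eta -> In (ev eta') eta = 0.
Proof.
move=> hs hns; apply: big1 => i _.
case: (posnP (ev eta i)) => hp; first by rewrite rt0 // mul0r.
case: eqP => hsh; last by rewrite mulr0.
exfalso; move/negP: hns; apply; rewrite /S -(sum_sh hp) hsh; exact: hs.
Qed.

Lemma bal_S eta' c : S eta' ->
  \sum_(eta | S eta) (c * mu (ev eta) - nu eta) * In (ev eta') eta
  = (c * mu (ev eta') - nu eta') * Out (ev eta').
Proof.
move=> hs.
have -> : \sum_(eta | S eta) (c * mu (ev eta) - nu eta) * In (ev eta') eta
        = \sum_eta (c * mu (ev eta) - nu eta) * In (ev eta') eta.
  rewrite [RHS](bigID S) /= [X in _ = _ + X]big1 ?addr0 // => eta hns.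
  by rewrite In_S // mulr0.
under eq_bigr do rewrite mulrBl -mulrA.
rewrite sumrB bal1 -big_distrr /= MS //; last by rewrite (eqP hs).
by rewrite mulrBl mulrA.
Qed.

Lemma prop eta' c : S eta' -> nu eta' = c * mu (ev eta') ->
  ((forall eta, S eta -> nu eta <= c * mu (ev eta)) \/
   (forall eta, S eta -> c * mu (ev eta) <= nu eta)) ->
  forall eta, S eta -> 0 < In (ev eta') eta -> nu eta = c * mu (ev eta).
Proof.
move=> hs he hsign eta hS hIn.
have h0 := bal_S c hs; rewrite he subrr mul0r in h0.
have hIn0 : In (ev eta') eta != 0 by rewrite gt_eqF.
case: hsign => hsg.
  have hpos : forall e, S e -> 0 <= (c * mu (ev e) - nu e) * In (ev eta') e.
    by move=> e hE; rewrite mulr_ge0 ?(In_ge0 hx ht) // subr_ge0 hsg.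
  have /eqP := psumr_eq0P hpos h0 hS.
  by rewrite mulf_eq0 (negbTE hIn0) orbF subr_eq0 => /eqP <-.
have h1 : \sum_(eta | S eta) (nu eta - c * mu (ev eta)) * In (ev eta') eta = 0.
  rewrite -[RHS]oppr0 -[in RHS]h0 -sumrN; apply: eq_bigr => *; ring.
have hpos : forall e, S e -> 0 <= (nu e - c * mu (ev e)) * In (ev eta') e.
  by move=> e hE; rewrite mulr_ge0 ?(In_ge0 hx ht) // subr_ge0 hsg.
have /eqP := psumr_eq0P hpos h1 hS.
by rewrite mulf_eq0 (negbTE hIn0) orbF subr_eq0 => /eqP.
Qed.

Definition Phi (eta : E) := (\sum_(b < n) b * ev eta b)%N.

Lemma step eta' (p : 'I_n) : S eta' -> (0 < p)%N -> (0 < ev eta' p)%N ->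
  exists eta, [/\ S eta, 0 < In (ev eta') eta & (Phi eta < Phi eta')%N].
Proof.
move=> hs hp0 hpp.
have hq : (p.-1 < n)%N by apply: leq_ltn_trans (leq_pred p) (ltn_ord p).
set q : 'I_n := Ordinal hq.
have hqp : q != p by rewrite -val_eqE /=; lia.
set psi : {ffun 'I_n -> nat} := [ffun b => (ev eta' b + (b == q) - (b == p))%N].
have hM : (\sum_b ev eta' b = M)%N by apply/eqP.
have hb b : (psi b <= B)%N.
  apply: leq_trans hMB; rewrite -hM ffunE.
  case: (b =P q) => [->|hbq].
    rewrite (negbTE hqp) subn0 addn1.
    move: (two_le_sum (ev eta') hqp) => h; apply: leq_trans h; by rewrite -addn1 leq_add2l.
  rewrite (bigD1 b) //= addn0; apply: leq_trans (leq_subr _ _) _; exact: leq_addr.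
set eta : E := [ffun b => inord (psi b)].
have hev : ev eta = psi.
  by apply/ffunP => b; rewrite evE [eta b]ffunE inordK // ltnS; exact: hb.
have hSq : ordS q = p.
  apply/val_inj => /=; rewrite prednK // modn_small //.
have hshq : sh q psi = ev eta'.
  apply/ffunP => b; rewrite /sh !ffunE hSq.
  apply: natlem3 => /eqP ->; by rewrite -evE.
have hpsiq : (0 < psi q)%N by rewrite ffunE eqxx (negbTE hqp) addn1 subn0.
exists eta; split.
- by rewrite /S hev -(sum_sh hpsiq) hshq hM.
- rewrite /In (bigD1 q) //= hev hshq eqxx mulr1.
  apply: (lt_le_trans (rt_gt0 hx ht hpsiq)); rewrite lerDl sumr_ge0 // => i _.
  by rewrite mulr_ge0 ?(rt_ge0 hx ht) ?ler0n.
- have h1 : (Phi eta + p = Phi eta' + q)%N.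
    rewrite /Phi hev -{1}(sum_ind_nat p) -(sum_ind_nat q) -!big_split /=.
    apply: eq_bigr => b _; rewrite ffunE -!mulnDr; congr (_ * _)%N.
    case: (b =P p) => [->|hbp]; last by rewrite subn0 addn0.
    rewrite eq_sym (negbTE hqp) /= addn0 subn1 addn1 prednK //.
  by move: h1 => /=; lia.
Qed.

Definition delta : E := [ffun b : 'I_n => inord (if val b == 0%N then M else 0%N)].

Lemma ev_delta b : ev delta b = (if val b == 0%N then M else 0%N).
Proof. by rewrite evE ffunE inordK // ltnS; case: ifP. Qed.

Lemma S_delta : S delta.
Proof.
rewrite /S (bigD1 (Ordinal hn)) //= ev_delta eqxx big1 ?addn0 // => b hb.
rewrite ev_delta; case: eqP => // h; exfalso; move/negP: hb; apply.
by apply/eqP/val_inj.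
Qed.

Lemma delta_or eta : S eta -> eta = delta \/
  exists p : 'I_n, (0 < p)%N /\ (0 < ev eta p)%N.
Proof.
move=> hs; case: (pickP (fun p : 'I_n => (0 < p)%N && (0 < ev eta p)%N)) => [p /andP[h1 h2]|hno].
  by right; exists p.
left; apply: ev_inj; apply/ffunP => b; rewrite ev_delta.
have hz : forall b' : 'I_n, val b' != 0%N -> ev eta b' = 0%N.
  move=> b' hb'; have := hno b'; rewrite lt0n hb' /=; lia.
case: eqP => hb; last by apply: hz; apply/eqP.
rewrite -(eqP hs) (bigD1 b) //= big1 ?addn0 // => b' hb'; apply: hz.
by apply: contra hb' => /eqP h; apply/eqP/val_inj; rewrite /= h hb.
Qed.

Lemma reach c :
  ((forall eta, S eta -> nu eta <= c * mu (ev eta)) \/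
   (forall eta, S eta -> c * mu (ev eta) <= nu eta)) ->
  forall eta, S eta -> nu eta = c * mu (ev eta) -> nu delta = c * mu (ev delta).
Proof.
move=> hsign eta hs he.
suff H : forall d eta, S eta -> nu eta = c * mu (ev eta) -> (Phi eta < d)%N ->
  nu delta = c * mu (ev delta) by exact: (H (Phi eta).+1 eta).
elim=> [|d IH] {}eta {}hs {}he hd //.
case: (delta_or hs) => [<- //|[p [hp0 hpp]]].
have [eta2 [hs2 hIn hPhi]] := step hs hp0 hpp.
apply: (IH eta2) => //; last by lia.
exact: (prop hs he hsign hs2 hIn).
Qed.

Lemma uniq_nu : exists c, forall eta, S eta -> nu eta = c * mu (ev eta).
Proof.
set h := fun eta => nu eta / mu (ev eta).
have mu0 : forall eta : E, mu (ev eta) != 0 by move=> eta; rewrite gt_eqF // (mu_gt0 hx ht).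
have mup : forall eta : E, 0 < mu (ev eta) by move=> eta; rewrite (mu_gt0 hx ht).
case: (arg_maxP h S_delta) => emax Smax hmax.
case: (arg_minP h S_delta) => emin Smin hmin.
have emaxE : nu emax = h emax * mu (ev emax) by rewrite /h divfK.
have eminE : nu emin = h emin * mu (ev emin) by rewrite /h divfK.
have s1 : forall eta, S eta -> nu eta <= h emax * mu (ev eta).
  by move=> eta hs; rewrite -ler_pdivrMr //; exact: hmax.
have s2 : forall eta, S eta -> h emin * mu (ev eta) <= nu eta.
  by move=> eta hs; rewrite -ler_pdivlMr //; exact: hmin.
have r1 := reach (or_introl s1) Smax emaxE.
have r2 := reach (or_intror s2) Smin eminE.
have ee : h emax = h emin by apply: (mulIf (mu0 delta)); rewrite -r1 -r2.
exists (h emax) => eta hs; apply/eqP; rewrite eq_le s1 //= ee s2 //.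
Qed.
End Max.

Lemma one_le_sumT (I : finType) (f : I -> nat) i : (f i <= \sum_b f b)%N.
Proof. by rewrite (bigD1 i) //= leq_addr. Qed.

Section Sums.
Variables (R : realFieldType) (n : nat) (x : 'I_n -> R) (t : R).
Hypotheses (hx : forall i, 0 < x i) (ht : 0 < t).

Lemma SBbound B M (G : {ffun 'I_n -> nat} -> R) : (M <= B)%N ->
  \sum_(eta : {ffun 'I_n -> 'I_B.+1} | (\sum_i ev eta i == M)%N) G (ev eta)
  = \sum_(eta : {ffun 'I_n -> 'I_M.+1} | (\sum_i ev eta i == M)%N) G (ev eta).
Proof.
move=> hMB.
have le_sum : forall B' (eta : {ffun 'I_n -> 'I_B'.+1}) i, (\sum_i ev eta i == M)%N ->
    (ev eta i <= M)%N.
  move=> B' eta i /eqP <-; exact: one_le_sumT.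
pose h (eta : {ffun 'I_n -> 'I_M.+1}) : {ffun 'I_n -> 'I_B.+1} := [ffun i => inord (eta i)].
pose h' (eta : {ffun 'I_n -> 'I_B.+1}) : {ffun 'I_n -> 'I_M.+1} := [ffun i => inord (eta i)].
have evh : forall eta, ev (h eta) = ev eta.
  move=> eta; apply/ffunP => i; rewrite !evE ffunE inordK //.
  by apply: leq_trans (ltn_ord (eta i)) _; rewrite ltnS.
rewrite (reindex_onto h h').
  apply: eq_big => eta; last by rewrite evh.
  rewrite evh; case: eqP => // hs /=; apply/eqP/ffunP => i.
  have e1 : ((inord (eta i) : 'I_B.+1) : nat) = eta i.
    by rewrite inordK //; apply: leq_trans (ltn_ord (eta i)) _; rewrite ltnS.
  by apply/val_inj; rewrite /= !ffunE e1 inord_val.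
move=> eta hs; apply/ffunP => i.
have hle : (eta i <= M)%N by have := le_sum _ eta i hs; rewrite evE.
have e1 : ((inord (eta i) : 'I_M.+1) : nat) = eta i by rewrite inordK.
by apply/val_inj; rewrite !ffunE /= e1 inord_val.
Qed.


Lemma Htilde_mu M : Htilde x t M =
  qfact t M * \sum_(eta : {ffun 'I_n -> 'I_M.+1} | (\sum_i ev eta i == M)%N) mu x t (ev eta).
Proof.
rewrite /Htilde big_distrr /=; apply: eq_big => [eta|eta _].
  by congr (_ == _); apply: eq_bigr => i _; rewrite evE.
rewrite /mu /F1 prodf_div.
have e1 : \prod_i x i ^+ ev eta i = \prod_(i < n) x i ^+ eta i.
  by apply: eq_bigr => i _; rewrite evE.
have e2 : \prod_i qfact t (ev eta i) = \prod_(i < n) qfact t (eta i).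
  by apply: eq_bigr => i _; rewrite evE.
by rewrite e1 e2 mulrAC mulrA.
Qed.

Lemma mu_dec (phi psi : {ffun 'I_n -> nat}) s0 : (0 < phi s0)%N ->
  psi s0 = (phi s0).-1 -> (forall b, b != s0 -> psi b = phi b) ->
  mu x t psi = mu x t phi * rt x t phi s0.
Proof.
move=> hp h0 ho; rewrite /mu (bigD1 s0) //= [in RHS](bigD1 s0) //=.
have -> : \prod_(b | b != s0) F1 x t b (psi b) = \prod_(b | b != s0) F1 x t b (phi b).
  by apply: eq_bigr => b hb; rewrite ho.
rewrite h0 -[in LHS](prednK hp) /= -(Fstep hx ht s0 (phi s0).-1) /rt prednK //; ring.
Qed.

Lemma sum_minus (f : {ffun 'I_n -> nat}) s0 : (0 < f s0)%N ->
  (\sum_b (f b - (b == s0)) = (\sum_b f b).-1)%N.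
Proof.
move=> hp; rewrite (bigD1 s0) //= [in RHS](bigD1 s0) //= eqxx.
rewrite (eq_bigr (fun b => f b)); last by move=> b /negbTE ->; rewrite subn0.
by rewrite subn1; case: (f s0) hp.
Qed.

Lemma shift_sum M s0 :
  \sum_(eta : {ffun 'I_n -> 'I_M.+2} | (\sum_i ev eta i == M.+1)%N) mu x t (ev eta) * rt x t (ev eta) s0
  = \sum_(eta : {ffun 'I_n -> 'I_M.+2} | (\sum_i ev eta i == M)%N) mu x t (ev eta).
Proof.
pose h (eta : {ffun 'I_n -> 'I_M.+2}) : {ffun 'I_n -> 'I_M.+2} :=
  [ffun b => inord (ev eta b + (b == s0))].
pose h' (eta : {ffun 'I_n -> 'I_M.+2}) : {ffun 'I_n -> 'I_M.+2} :=
  [ffun b => inord (ev eta b - (b == s0))].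
have evh' : forall eta b, ev (h' eta) b = (ev eta b - (b == s0))%N.
  move=> eta b; rewrite evE ffunE inordK // ltnS.
  apply: leq_trans (leq_subr _ _) _; rewrite evE -ltnS; exact: ltn_ord.
have evh : forall eta b, (ev eta b <= M)%N -> ev (h eta) b = (ev eta b + (b == s0))%N.
  move=> eta b hb; rewrite evE ffunE inordK // ltnS.
  by case: (b == s0) => /=; lia.
rewrite [RHS](reindex_onto h' h); last first.
  move=> j hj; apply: ev_inj; apply/ffunP => b; rewrite evh' evh ?addnK //.
  by move/eqP: hj => hj; rewrite -[X in (_ <= X)%N]hj; exact: one_le_sumT.
rewrite big_mkcond [RHS]big_mkcond; apply: eq_bigr => eta _.
case: (posnP (ev eta s0)) => hp.
  rewrite rt0 // mulr0 if_same.
  case: ifP => // /andP[_ /eqP he]; exfalso.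
  have := congr1 (fun f => ev f s0) he.
  rewrite evh; last by rewrite evh' hp.
  by rewrite evh' hp eqxx.
have hsum : (\sum_i ev (h' eta) i = (\sum_i ev eta i).-1)%N.
  by rewrite -(sum_minus hp); apply: eq_bigr => b _; rewrite evh'.
have hpos : (0 < \sum_i ev eta i)%N by apply: leq_trans hp (one_le_sumT _ _).
case: ifP => hS; last first.
  case: ifP => // /andP[/eqP h1 _]; move: hS; rewrite hsum in h1.
  move/negbT/eqP; move: h1 hpos; move: (\sum_i ev eta i)%N => s; lia.
have hle : forall b, (ev eta b - (b == s0) <= M)%N.
  move=> b; case: (b =P s0) => [->|hb] /=.
    have := one_le_sumT (ev eta) s0; rewrite (eqP hS); lia.
  have := two_le_sum (ev eta) (introN eqP hb : b != s0); rewrite (eqP hS) subn0; lia.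
have hhh : h (h' eta) = eta.
  apply: ev_inj; apply/ffunP => b; rewrite evh evh' ?hle //.
  by case: (b =P s0) => [->|_] /=; [rewrite subnK | rewrite subn0 addn0].
rewrite hhh eqxx andbT hsum (eqP hS) /= eqxx.
rewrite (@mu_dec (ev eta) (ev (h' eta)) s0) // => [|b hb]; rewrite evh' ?eqxx ?subn1 //.
by rewrite (negbTE hb) subn0.
Qed.

End Sums.

Section Final.
Variables (R : realFieldType) (k : nat) (m : 'I_k -> nat) (n : nat)
  (x : 'I_n -> R) (t : R).
Local Notation N := (\sum_(s < k) m s)%N.
Local Notation cfg := (config n k N).
Variable pi : cfg -> R.
Hypotheses (hpi : stationary m x t pi) (hn : (0 < n)%N)
  (hx : forall i, 0 < x i) (ht : 0 < t).
Variable a : nat.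
Local Notation M := (\sum_(s < k | (a <= s)%N) m s)%N.
Local Notation E := {ffun 'I_n -> 'I_N.+1}.

Definition projC (w : cfg) : E := [ffun i => inord (C (m:=m) a w i)].
Definition nu (eta : E) := \sum_(w | valid m w && (projC w == eta)) pi w.

Lemma ev_projC w : valid m w -> ev (projC w) = C (m:=m) a w.
Proof.
by move=> hv; apply/ffunP => i; rewrite evE ffunE inordK // ltnS C_le_N.
Qed.

Lemma group (F : {ffun 'I_n -> nat} -> R) :
  \sum_(w | valid m w) pi w * F (C (m:=m) a w) = \sum_(eta : E) nu eta * F (ev eta).
Proof.
rewrite (partition_big projC predT) //=; apply: eq_bigr => eta _.
rewrite /nu big_distrl /=; apply: eq_bigr => w /andP[hv /eqP <-].
by rewrite ev_projC.
Qed.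

Lemma nu_sum : \sum_(eta : E) nu eta = 1.
Proof.
case: hpi => _ h1 _; rewrite -h1.
transitivity (\sum_(eta : E) nu eta * 1); first by apply: eq_bigr => *; rewrite mulr1.
by rewrite -(group (fun _ => 1)); apply: eq_bigr => *; rewrite mulr1.
Qed.

Lemma nu_S eta : ~~ S M eta -> nu eta = 0.
Proof.
move=> hns; apply: big1 => w /andP[hv /eqP he].
by move: hns; rewrite /S -he ev_projC // sum_C // eqxx.
Qed.

Lemma nu_LB (eta' : E) : \sum_(eta : E) nu eta * \sum_(i < n) rt x t (ev eta) i *
          ((sh i (ev eta) == ev eta')%:R - (ev eta == ev eta')%:R) = 0.
Proof.
rewrite -(group (fun phi => \sum_(i < n) rt x t phi i *
          ((sh i phi == ev eta')%:R - (phi == ev eta')%:R))).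
exact: (lumped_gen hpi a (fun phi => (phi == ev eta')%:R)).
Qed.

Lemma M_le_N : (M <= N)%N.
Proof. by rewrite [X in (_ <= X)%N](bigID (fun s : 'I_k => (a <= s)%N)) /= leq_addr. Qed.

Lemma final_arith (M0 : nat) (c : R) (s0 : 'I_n) : (M0 <= N)%N ->
  c * \sum_(eta : E | S M0 eta) mu x t (ev eta) = 1 ->
  c * \sum_(eta : E | S M0 eta) mu x t (ev eta) * rt x t (ev eta) s0
  = qint t M0 * Htilde x t (M0 - 1) / Htilde x t M0.
Proof.
rewrite /S; case: M0 => [|M'] hle h0.
  rewrite qint0 !mul0r big1 ?mulr0 // => eta /eqP hs.
  rewrite rt0 ?mulr0 //; apply/eqP; rewrite -leqn0; move: (one_le_sumT (ev eta) s0); by rewrite hs.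
rewrite (SBbound (B:=N) (M:=M'.+1) (fun phi => mu x t phi * rt x t phi s0)) //.
rewrite (shift_sum hx ht) (SBbound (B:=M'.+1) (M:=M')) //.
rewrite (SBbound (B:=N) (M:=M'.+1) (mu x t)) // in h0.
rewrite subn1 /= !Htilde_mu qfactS.
set T0 := \sum_(eta | _) _ in h0 *.
set T1 := \sum_(eta | _) _.
have hT0 : T0 != 0 by apply/eqP => e; move: h0; rewrite e mulr0 => /eqP; rewrite eq_sym oner_eq0.
have hq1 : qfact t M' != 0 by rewrite gt_eqF // qfact_gt0.
have hq2 : qint t M'.+1 != 0 by rewrite gt_eqF // qint_gt0.
have -> : c = T0^-1 by apply: (mulIf hT0); rewrite h0 mulVf.
field; rewrite hT0 hq1 hq2 //.
Qed.

Lemma current_a :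
  \sum_(w | valid m w) pi w * ((x (Ordinal hn))^-1 * qint t (C (m:=m) a w (Ordinal hn)))
  = qint t M * Htilde x t (M - 1) / Htilde x t M.
Proof.
set s0 := Ordinal hn.
have [c hc] := uniq_nu hx ht M_le_N hn nu_LB.
have nuE : forall eta : E, nu eta = if S M eta then c * mu x t (ev eta) else 0.
  by move=> eta; case: ifPn => h; [exact: hc | exact: nu_S].
have h0 : c * \sum_(eta : E | S M eta) mu x t (ev eta) = 1.
  rewrite -nu_sum big_mkcond big_distrr /=; apply: eq_bigr => eta _.
  by rewrite nuE; case: (S _ eta); rewrite ?mulr0.
have h1 := group (fun phi => rt x t phi s0).
rewrite /= in h1; rewrite h1.
have -> : \sum_(eta : E) nu eta * rt x t (ev eta) s0
   = c * \sum_(eta : E | S M eta) mu x t (ev eta) * rt x t (ev eta) s0.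
  rewrite [in RHS]big_mkcond [in RHS]big_distrr /=; apply: eq_bigr => eta _.
  by rewrite nuE; case: (S M eta); rewrite ?mul0r ?mulr0 // mulrA.
exact: final_arith M_le_N h0.
Qed.
End Final.

End Aux.
Import Aux.

Theorem theorem7 (R : realFieldType) (k : nat) (m : 'I_k -> nat)
    (hm : forall s, (0 < m s)%N) (n : nat) (hn : (0 < n)%N)
    (x : 'I_n -> R) (hx : forall i, 0 < x i) (t : R) (ht : 0 < t)
    (pi : config n k (\sum_(s < k) m s) -> R)
    (hpi : stationary m x t pi) (j : 'I_k) :
  let site1 : 'I_n := Ordinal hn in
  let Mj := (\sum_(s < k | (j <= s)%N) m s)%N in
  let Mj1 := (\sum_(s < k | (j < s)%N) m s)%N in
  \sum_(w | valid m w) pi w * jump_rate x t w site1 j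
  = qint t Mj * Htilde x t (Mj - 1) / Htilde x t Mj
    - qint t Mj1 * Htilde x t (Mj1 - 1) / Htilde x t Mj1.
Proof.
move=> site1 Mj Mj1.
rewrite -(current_a hpi hn hx ht j) -(current_a hpi hn hx ht j.+1) -sumrB.
apply: eq_bigr => w _; rewrite -mulrBr; congr (_ * _).
rewrite /jump_rate !CE (big_geS _ (ltn_ord j)) /=.
have -> : Ordinal (ltn_ord j) = j by apply/val_inj.
rewrite qintD; ring.
Qed.
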